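(* Let $G$ be a finite group with $|G| = qp^k$, where $p < q$ are primes and $k \geq 1$, and suppose $m^*(G) = |G|$. Let $N$ be a minimal normal subgroup of $G$. Then $|N| = p^n$ for some $n \geq 1$ and $|G/C_G(N)| = qp^r$ for some $r \geq 1$ with $p^n < qp^r$. Furthermore, a Sylow $q$-subgroup of $G/C_G(N)$ acts irreducibly on $N$ (viewed as an $n$-dimensional vector space over $GF(p)$, with $G/C_G(N)$ acting by conjugation).
   Context: For $H \leq G$, $m_G(H) = |H|\,|C_G(H)|$ and $m^*(G) = \max\{ m_G(H) : H \leq G\}$. *)

(* Defs.v *)
From mathcomp Require Import all_boot all_fingroup all_solvable.
Set Implicit Arguments. Unset Strict Implicit. Unset Printing Implicit Defensive.
Local Open Scope group_scope.

Definition mG (gT : finGroupType) (G H : {set gT}) : nat := #|H| * #|'C_G(H)|.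

Definition mstar (gT : finGroupType) (G : {set gT}) : nat :=
  \max_(H : {group gT} | H \subset G) mG G H.

(* Main.v *)
Require Import Defs.
From mathcomp Require Import all_boot all_fingroup all_solvable.
From mathcomp Require integral_char.
From mathcomp Require Import zify.
Set Implicit Arguments. Unset Strict Implicit. Unset Printing Implicit Defensive.
Local Open Scope group_scope.

Lemma mG_bound gT (G H : {group gT}) :
  mstar G = #|G| -> H \subset G -> (#|H| * #|'C_G(H)| <= #|G|)%N.
Proof.
move=> hm sHG; rewrite -[X in (_ <= X)%N]hm /mstar.
by have := @leq_bigmax_cond _ (fun H : {group gT} => H \subset G) (fun H : {group gT} => mG G H) H sHG.
Qed.

Lemma Z_triv gT (G : {group gT}) : mstar G = #|G| -> 'Z(G) = 1.
Proof.
move=> hm; have := mG_bound hm (subxx G).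
rewrite -{2}[#|G|]muln1 leq_pmul2l ?cardG_gt0 // => h.
exact: card_le1_trivg.
Qed.

Lemma aut_bound gT (A H : {group gT}) :
  H \subset 'N(A) -> (#|H : 'C_H(A)| <= #|Aut A|)%N.
Proof.
move=> nAH; have := subset_leq_card (Aut_conj_aut A H).
by rewrite card_morphim ker_conj_aut (setIidPr nAH) -indexgI.
Qed.

Lemma solG gT (G : {group gT}) p q k :
  prime p -> prime q -> #|G| = (q * p ^ k)%N -> solvable G.
Proof.
move=> pp pq oG; apply: integral_char.Burnside_p_a_q_b.
have -> : 2 = size [:: p; q] by [].
apply: uniq_leq_size; first exact: primes_uniq.
move=> r hr; have := hr; rewrite mem_primes => /and3P[pr _ dv].
rewrite oG Euclid_dvdM // in dv; case/orP: dv => dv.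
  by rewrite dvdn_prime2 // in dv; rewrite (eqP dv) mem_seq2 eqxx orbT.
rewrite Euclid_dvdX // in dv; case/andP: dv => dv _.
by rewrite dvdn_prime2 // in dv; rewrite (eqP dv) mem_seq2 eqxx.
Qed.

Lemma center_kill gT (G W : {group gT}) a b :
  'Z(G) = 1 -> W \subset G -> (a %| #|'C_G(W)|)%N -> (b %| #|'C_G(W)|)%N ->
  coprime a b -> (#|G| %| a * b)%N -> W :=: 1.
Proof.
move=> Z1 sWG da db cab dG.
have dGC : (#|G| %| #|'C_G(W)|)%N.
  by apply: dvdn_trans dG _; rewrite Gauss_dvd // da db.
have eqC : 'C_G(W) = G.
  apply/eqP; rewrite eqEcard subsetIl /=.
  by apply: dvdn_leq => //; rewrite cardG_gt0.
apply/trivgP; rewrite -Z1 /center subsetI sWG /= centsC.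
by rewrite -{1}eqC subsetIr.
Qed.

Lemma mod1_big a q : (1 < q -> a %% q = 1 -> 1 < a -> q < a)%N.
Proof.
move=> q1 am a1; rewrite (divn_eq a q) am.
have : 0 < a %/ q.
  rewrite divn_gt0 ?(ltnW q1) //; apply: contraLR a1; rewrite -!ltnNge => aq.
  by rewrite -am modn_small.
case: (a %/ q) => // m _; lia.
Qed.

Lemma part_qpk p q k : prime p -> prime q -> p != q ->
  ((q * p ^ k)`_p = p ^ k /\ (q * p ^ k)`_q = q)%N.
Proof.
move=> pp pq npq.
have pk0 : (0 < p ^ k)%N by rewrite expn_gt0 prime_gt0.
rewrite !p_part !lognM ?pk0 ?prime_gt0 // !(logn_prime _ pq) pfactorK // lognX.
by rewrite (logn_prime _ pp) (negbTE npq) eq_sym (negbTE npq) eqxx muln0 addn0 add0n expn1.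
Qed.

Unset Implicit Arguments.

Theorem proposition8 (gT : finGroupType) (G N : {group gT}) (p q k : nat) :
  prime p -> prime q -> p < q -> 1 <= k ->
  #|G| = (q * p ^ k)%N ->
  mstar G = #|G| ->
  N <| G -> minnormal N G ->
  (exists n, 1 <= n /\ #|N| = (p ^ n)%N /\
     exists r, 1 <= r /\ #|G / 'C_G(N)| = (q * p ^ r)%N /\ (p ^ n < q * p ^ r)%N) /\
  (forall Q : {group coset_of 'C_G(N)}, Q \in 'Syl_q(G / 'C_G(N)) ->
     acts_irreducibly Q N ('J %% 'C_G(N))%gact).
Proof.
move=> pp pq ltpq k1 oG hm nsNG minN.
have Z1 := Z_triv hm.
have solGG := solG pp pq oG.
have sNG := normal_sub nsNG; have nNG := normal_norm nsNG.
have [_ ntN abN] := minnormal_solvable minN sNG solGG.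
have [r pr rabN] := is_abelemP abN.
have rN := abelem_pgroup rabN.
have cNN : N \subset 'C(N) := abelem_abelian rabN.
have sNC : N \subset 'C_G(N) by rewrite subsetI sNG.
have sCG : 'C_G(N) \subset G := subsetIl _ _.
have nCG : G \subset 'N('C_G(N)) by rewrite normsI ?normG ?norms_cent.
have nsCG : 'C_G(N) <| G by rewrite /normal sCG.
have bN := mG_bound hm sNG.
have LagC := Lagrange sCG.
have q1 : (1 < q)%N := prime_gt1 pq.
have p1 : (1 < p)%N := prime_gt1 pp.
have [_ rdN [m oN]] := pgroup_pdiv rN ntN.
have rdG : (r %| q * p ^ k)%N by rewrite -oG (dvdn_trans rdN) ?cardSg.
have rpq : r = p \/ r = q.
  rewrite Euclid_dvdM // in rdG; case/orP: rdG => dv.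
    by rewrite dvdn_prime2 // in dv; right; apply/eqP.
  rewrite Euclid_dvdX // in dv; case/andP: dv => dv _.
  by rewrite dvdn_prime2 // in dv; left; apply/eqP.
have {rpq} rp : r = p.
  case: rpq => // rq; exfalso; subst r.
  have m0 : m = 0.
    case: m oN => // m oN.
    have : (q * q %| q * p ^ k)%N.
      rewrite -oG; apply: dvdn_trans (cardSg sNG); rewrite oN !expnS.
      by rewrite dvdn_mul // dvdn_mulr.
    rewrite dvdn_pmul2l ?prime_gt0 // Euclid_dvdX // => /andP[dv _].
    by rewrite dvdn_prime2 // in dv; move/eqP: dv => dv; rewrite dv ltnn in ltpq.
  subst m; rewrite expn1 in oN.
  have cycN : cyclic N by rewrite prime_cyclic ?oN.
  have hA := aut_bound nNG; rewrite card_Aut_cyclic // oN totient_prime // in hA.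
  rewrite oN oG in bN; rewrite leq_pmul2l ?prime_gt0 // in bN.
  have := leq_mul bN hA; rewrite LagC oG.
  rewrite mulnC leq_pmul2l ?expn_gt0 ?prime_gt0 // => h.
  have hq : (q.-1 < q)%N by rewrite ltn_predL prime_gt0.
  by have := leq_ltn_trans h hq; rewrite ltnn.
subst r.
have npq : p != q by rewrite neq_ltn ltpq.
have [partp partq] := part_qpk k pp pq npq.
have pk0 : (0 < p ^ k)%N by rewrite expn_gt0 prime_gt0.
set n := logn p #|N|.
have oN' : #|N| = (p ^ n)%N := card_pgroup rN.
have n1 : (0 < n)%N.
  rewrite lt0n; apply: contraNneq ntN => n0.
  by rewrite trivg_card1 oN' n0.
have pn1 : (1 < p ^ n)%N by rewrite -(expn0 p) ltn_exp2l.
have nqC : ~~ (q %| #|'C_G(N)|).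
  apply/negP => qC.
  have [P sylP] := Sylow_exists p G.
  have sNP : N \subset P := normal_sub_max_pgroup (Hall_max sylP) rN nsNG.
  have nsNP : N <| P := normalS sNP (pHall_sub sylP) nsNG.
  have pP := pHall_pgroup sylP.
  have oP : #|P| = (p ^ k)%N by rewrite (card_Hall sylP) oG partp.
  have := meet_center_nil (pgroup_nil pP) nsNP ntN.
  apply/negP/negPn/eqP; apply: (center_kill (a := (p ^ k)%N) (b := q) Z1).
  - by rewrite subIset ?sNG.
  - rewrite -oP cardSg // subsetI (pHall_sub sylP) centsC.
    by apply: subset_trans (subsetIr _ _) _; rewrite /center subsetIr.
  - apply: dvdn_trans qC (cardSg _); rewrite subsetI sCG /=.
    by apply: subset_trans (subsetIr _ _) (centS _); rewrite subIset ?subxx.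
  - by apply: coprimeXl; rewrite prime_coprime // dvdn_prime2.
  - by rewrite oG mulnC.
have [c leck oC] : exists2 c, (c <= k)%N & #|'C_G(N)| = (p ^ c)%N.
  apply/dvdn_pfactor => //.
  have cq : coprime #|'C_G(N)| q by rewrite coprime_sym prime_coprime.
  by have := cardSg sCG; rewrite oG Gauss_dvdr.
have ekc : (p ^ k = p ^ c * p ^ (k - c))%N by rewrite -expnD subnKC.
have oGC : #|G : 'C_G(N)| = (q * p ^ (k - c))%N.
  apply/eqP; rewrite -(eqn_pmul2l (_ : 0 < p ^ c)%N) ?expn_gt0 ?prime_gt0 //.
  by rewrite -oC LagC oG oC ekc mulnCA.
have oK : #|G / 'C_G(N)| = (q * p ^ (k - c))%N by rewrite card_quotient.
have bnd : (p ^ n <= q * p ^ (k - c))%N.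
  rewrite oN' oC oG ekc mulnCA mulnC leq_pmul2l ?expn_gt0 ?prime_gt0 // in bN.
have strict : (p ^ n < q * p ^ (k - c))%N.
  rewrite ltn_neqAle bnd andbT; apply/eqP => e.
  have : (q %| p ^ n)%N by rewrite e dvdn_mulr.
  rewrite Euclid_dvdX // dvdn_prime2 // eq_sym (negbTE npq).
  done.
have ckr : (c < k)%N.
  rewrite ltn_neqAle leck andbT; apply/eqP => eck; subst c.
  rewrite subnn expn0 muln1 in bnd.
  have qG : (q %| #|G|)%N by rewrite oG dvdn_mulr.
  have [x Gx ox] := Cauchy pq qG.
  have oX : #|<[x]>| = q by rewrite -ox.
  have W1 : N :&: 'C(<[x]>) = 1.
    apply: (center_kill (a := q) (b := (p ^ k)%N) Z1).
    - by rewrite subIset ?sNG.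
    - rewrite -oX cardSg // subsetI cycle_subG Gx /= centsC.
      exact: subsetIr.
    - rewrite -oC cardSg // subsetI sCG /=.
      by apply: subset_trans (subsetIr _ _) (centS _); rewrite subIset ?subxx.
    - by apply: coprimeXr; rewrite prime_coprime // dvdn_prime2 // eq_sym.
    - by rewrite oG.
  have qX : q.-group <[x]> by rewrite /pgroup oX pnat_id.
  have actX : [acts <[x]>, on N | 'J].
    by rewrite astabsJ (subset_trans _ nNG) // cycle_subG.
  have := pgroup_fix_mod qX actX.
  rewrite afixJ W1 cards1 oN' (modn_small q1) => hm1.
  have := mod1_big q1 hm1 pn1.
  by rewrite ltnNge bnd.
split.
  exists n; split => //; split => //; exists (k - c).
  by rewrite subn_gt0 ckr oK strict.
have pC : p.-group 'C_G(N) by rewrite /pgroup oC pnatX pnat_id.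
have sRC : 'O_p(G) \subset 'C_G(N).
  have nsR := pcore_normal p G; have pR := pcore_pgroup p G.
  have sNR : N \subset 'O_p(G) := pcore_max rN nsNG.
  have nsNR : N <| 'O_p(G) := normalS sNR (normal_sub nsR) nsNG.
  have ntW := meet_center_nil (pgroup_nil pR) nsNR ntN.
  have WN : N :&: 'C('O_p(G)) = N.
    have [_ minN'] := mingroupP minN; apply: minN'; last exact: subsetIl.
    apply/andP; split.
      apply: contraNneq ntW => W1; apply/eqP/trivgP; rewrite -W1.
      by rewrite setIS // /center subsetIr.
    by rewrite normsI ?norms_cent ?normal_norm.
  rewrite subsetI (normal_sub nsR) centsC -WN; exact: subsetIr.
have OpK : forall U : {group coset_of 'C_G(N)},
    U <| G / 'C_G(N) -> p.-group U -> U :=: 1.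
  move=> U nsUK pU.
  pose U0 := (coset 'C_G(N) @*^-1 U)%G.
  have nsU0 : U0 <| G by rewrite -(quotientGK nsCG) cosetpre_normal.
  have nCU0 : U0 \subset 'N('C_G(N)) := subset_trans (normal_sub nsU0) nCG.
  have pU0 : p.-group U0 by rewrite -(pquotient_pgroup pC nCU0) cosetpreK.
  have sU0C : U0 \subset 'C_G(N) := subset_trans (pcore_max pU0 nsU0) sRC.
  apply/trivgP; rewrite -(cosetpreK U) -(trivg_quotient 'C_G(N)).
  exact: quotientS.
move=> Qb; rewrite inE => sylQ.
have [partp' partq'] := part_qpk (k - c) pp pq npq.
have oQb : #|Qb| = q by rewrite (card_Hall sylQ) oK partq'.
have qQb : q.-group Qb := pHall_pgroup sylQ.
have sQK : Qb \subset G / 'C_G(N) := pHall_sub sylQ.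
have solK : solvable (G / 'C_G(N)) := quotient_sol _ solGG.
have ntK : G / 'C_G(N) != 1.
  rewrite trivg_card1 oK; apply: contraTneq q1 => e.
  have : (q %| 1)%N by rewrite -e dvdn_mulr.
  by rewrite dvdn1 => /eqP ->.
have [Y minY sYK] : {Y : {group coset_of 'C_G(N)} | minnormal Y (G / 'C_G(N)) & Y \subset G / 'C_G(N)}.
  by apply: mingroup_exists; rewrite ntK normG.
have [nYK ntY abY] := minnormal_solvable minY sYK solK.
have [s ps sabY] := is_abelemP abY.
have sY := abelem_pgroup sabY.
have nsYK : Y <| G / 'C_G(N) by rewrite /normal sYK nYK.
have sq : s = q.
  have [_ sdY _] := pgroup_pdiv sY ntY.
  have : (s %| q * p ^ (k - c))%N by rewrite -oK (dvdn_trans sdY (cardSg sYK)).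
  rewrite Euclid_dvdM // => /orP[dv|dv].
    by rewrite dvdn_prime2 // in dv; apply/eqP.
  rewrite Euclid_dvdX // in dv; case/andP: dv => dv _.
  rewrite dvdn_prime2 // in dv; move/eqP: dv => dv; subst s.
  by have := OpK Y nsYK sY; move/eqP: ntY.
subst s.
have sYQ : Y \subset Qb := normal_sub_max_pgroup (Hall_max sylQ) sY nsYK.
have eYQ : Y :=: Qb.
  apply/eqP; rewrite eqEcard sYQ oQb /=.
  have : (#|Y| %| q)%N by rewrite -oQb cardSg.
  have nY1 : #|Y| != 1%N by rewrite -trivg_card1.
  by move/(prime_nt_dvdP pq nY1) ->.
have nsQK : Qb <| G / 'C_G(N) by rewrite -eYQ.
have cQQ : abelian Qb by rewrite cyclic_abelian // prime_cyclic ?oQb.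
have nQK := normal_norm nsQK.
have sXK : 'C_(G / 'C_G(N))(Qb) \subset G / 'C_G(N) := subsetIl _ _.
have nsXK : 'C_(G / 'C_G(N))(Qb) <| G / 'C_G(N).
  by rewrite /normal sXK normsI ?normG ?norms_cent.
have sQX : Qb \subset 'C_(G / 'C_G(N))(Qb) by rewrite subsetI sQK.
have sQZ : Qb \subset 'Z('C_(G / 'C_G(N))(Qb)).
  by rewrite /center subsetI sQX centsC subsetIr.
set X := 'C_(G / 'C_G(N))(Qb) in sXK nsXK sQX sQZ *.
have dX : (#|X| %| q * p ^ (k - c))%N by rewrite -oK cardSg.
have pXZ : p.-group (X / 'Z(X)).
  rewrite /pgroup card_quotient ?normal_norm ?center_normal //.
  have LZ := Lagrange (center_sub X).
  have : (q %| #|'Z(X)|)%N by rewrite -oQb cardSg.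
  case/dvdnP => z ez; rewrite ez in LZ.
  have : (q * (z * #|X : 'Z(X)|) %| q * p ^ (k - c))%N.
    by rewrite mulnCA mulnA LZ.
  rewrite dvdn_pmul2l ?prime_gt0 // => hd.
  apply: pnat_dvd (dvdn_trans (dvdn_mull z (dvdnn _)) hd) _.
  by rewrite pnatX pnat_id.
have nilX : nilpotent X by rewrite -quotient_center_nil (pgroup_nil pXZ).
have HO := nilpotent_pcore_Hall p nilX.
have nsOK : 'O_p(X) <| G / 'C_G(N) := char_normal_trans (pcore_char _ _) nsXK.
have O1 := OpK _ nsOK (pcore_pgroup _ _).
have Xp1 : (#|X|`_p == 1)%N by rewrite -(card_Hall HO) O1 cards1.
rewrite partn_eq1 ?cardG_gt0 // in Xp1.
have cX : coprime (p ^ (k - c)) #|X|.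
  by apply: pnat_coprime Xp1; rewrite pnatX pnat_id.
have Xq : (#|X| <= q)%N.
  rewrite coprime_sym in cX.
  by apply: dvdn_leq; rewrite ?prime_gt0 // -(Gauss_dvdl q cX).
have prq : (p ^ (k - c) < q)%N.
  have hA := aut_bound nQK.
  rewrite card_Aut_cyclic ?prime_cyclic ?oQb // totient_prime // in hA.
  have LX := Lagrange sXK.
  have := leq_mul Xq hA; rewrite LX oK leq_pmul2l ?prime_gt0 // => h.
  have hq : (q.-1 < q)%N by rewrite ltn_predL prime_gt0.
  exact: leq_ltn_trans h hq.
pose Q0 := (coset 'C_G(N) @*^-1 Qb)%G.
have nsQ0 : Q0 <| G by rewrite -(quotientGK nsCG) cosetpre_normal.
have oQ0 : #|Q0| = (#|'C_G(N)| * q)%N by rewrite card_cosetpre oQb.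
have nCQ0 : Q0 \subset 'N('C_G(N)) := subset_trans (normal_sub nsQ0) nCG.
have W1 : N :&: 'C(Q0) = 1.
  apply/eqP; apply: contraT => ntW.
  have [_ minN'] := mingroupP minN.
  have WN : N :&: 'C(Q0) = N.
    apply: minN'; last exact: subsetIl.
    by rewrite ntW normsI ?norms_cent ?normal_norm.
  have : Q0 \subset 'C_G(N).
    by rewrite subsetI (normal_sub nsQ0) centsC -WN subsetIr.
  move/subset_leq_card; rewrite oQ0 -{2}(muln1 #|_|) leq_pmul2l ?cardG_gt0 //.
  by rewrite leqNgt q1.
have fixQ : forall M : {group gT}, M \subset N ->
    [acts Qb, on M | ('J %% 'C_G(N))%gact] -> (#|M| %% q = 1)%N.
  move=> M sMN actM.
  have := pgroup_fix_mod qQb actM.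
  have cM : 'C_G(N) \subset 'C(M | 'J).
    by rewrite astabJ (subset_trans (subsetIr _ _)) // centS.
  rewrite -{1}(cosetpreK Qb) afix_mod //; last by rewrite subsetI subsetT.
  rewrite afixJ.
  have -> : M :&: 'C(Q0) = 1.
    by apply/trivgP; rewrite -W1 setSI.
  by rewrite cards1 (modn_small q1).
have actN : [acts Qb, on N | ('J %% 'C_G(N))%gact].
  rewrite /= astabs_mod ?astabJ ?subsetIr // astabsJ.
  exact: subset_trans sQK (quotientS _ nNG).
apply/mingroupP; split; first by rewrite ntN actN.
move=> M /andP[ntM actM] sMN.
have hM := fixQ M sMN actM.
have hN := fixQ N (subxx N) actN.
apply/eqP; apply: contraT => neMN.
have LM := Lagrange sMN.
rewrite -LM -modnMml hM mul1n in hN.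
have M1 : (1 < #|M|)%N by rewrite cardG_gt1.
have I1 : (1 < #|N : M|)%N.
  rewrite indexg_gt1; apply: contra neMN => sNM.
  by rewrite eqEsubset sMN sNM.
have qM := mod1_big q1 hM M1.
have qI := mod1_big q1 hN I1.
have := ltn_mul qM qI; rewrite LM oN' => h.
have h2 : (q * p ^ (k - c) <= q * q)%N by rewrite leq_mul2l (ltnW prq) orbT.
have := ltn_trans h (leq_trans strict h2).
by rewrite ltnn.
Qed.
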